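(* Let $A$ be a square, let $O_A$ be any operator supported on $A$, let $C=b_2(A)$, and suppose that the size of $C$ is at most $L^*$. Then: (i) $P_C O_A P_C=cP_C$ for some complex number $c$; (ii) all states $\psi$ with $P_C\psi=\psi$ have the same reduced density matrix on $A$, which equals the reduced density matrix on $A$ of any ground state of $H_0$ (i.e. any $\psi$ with $P\psi=\psi$); (iii) $\|O_AP\|=\|O_AP_C\|$.
   Context: Lattice: $\Lambda=\mathbb Z_L\times\mathbb Z_L$ with periodic boundary conditions; each site carries a qudit of fixed finite dimension and $\mathcal H=\bigotimes_{u\in\Lambda}\mathcal H_u$. $\mathcal S(r)$ is the set of all $r\times r$ square blocks of $\Lambda$. An operator is supported on $A$ if it acts as the identity outside $A$. $H_0=\sum_{A\in\mathcal S(2)}Q_A$ with $Q_A$ pairwise commuting projectors supported on $A$; $P=\prod_{A\in\mathcal S(2)}(I-Q_A)\ne0$ is the projector onto the (zero-energy) ground space of $H_0$. For a square $B\in\mathcal S(r)$, $r\ge2$: $P_B=\prod_{A\in\mathcal S(2),A\subseteq B}(I-Q_A)$, $Q_B=I-P_B$. For a square $A$ and integer $l\ge1$, $b_l(A)$ denotes the square consisting of $A$ together with all its first, second, …, $l$-th neighbours (the ''ball'' of distance $l$ around $A$). It is assumed that $H_0$ satisfies, for some integer $L^*$: TQO-1: for every $A\in\mathcal S(r)$ with $r\le L^*$ and every operator $O_A$ supported on $A$, $PO_AP=cP$ for some $c\in\mathbb C$. TQO-2: for every $A\in\mathcal S(r)$ with $r\le L^*$, with $B\in\mathcal S(r+2)$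 the square containing $A$ and all nearest neighbours of $A$, every operator $O_A$ supported on $A$ with $O_AP=0$ satisfies $O_AP_B=0$. *)

(* Defs.v *)
From HB Require Import structures.
From mathcomp Require Import all_boot all_order all_algebra.
Set Implicit Arguments. Unset Strict Implicit. Unset Printing Implicit Defensive.
Import Order.TTheory GRing.Theory Num.Theory.
Local Open Scope ring_scope.

(* Sites of the periodic lattice Z_L x Z_L. *)
Definition site (L : nat) := ('I_L * 'I_L)%type.

(* Computational-basis configurations: each site carries a qudit of dimension d.
   H = tensor product of C^d over sites has orthonormal basis indexed by cfg. *)
Definition cfg (L d : nat) := {ffun site L -> 'I_d}.

Definition dimH (L d : nat) : nat := #|{: cfg L d}|.

Definition opE (C : numClosedFieldType) (L d : nat) (O : 'M[C]_(dimH L d))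
  (x y : cfg L d) : C := O (enum_rank x) (enum_rank y).

Definition vecE (C : numClosedFieldType) (L d : nat) (v : 'cV[C]_(dimH L d))
  (x : cfg L d) : C := v (enum_rank x) 0.

(* The r x r square with lower-left corner (i,j) (coordinates taken mod L). *)
Definition sq (L : nat) (i j : int) (r : nat) : {set site L} :=
  [set u : site L | ((((nat_of_ord u.1)%:Z - i) %% (L%:Z))%Z < r%:Z)
                 && ((((nat_of_ord u.2)%:Z - j) %% (L%:Z))%Z < r%:Z)].

Definition squares (L r : nat) : {set {set site L}} :=
  [set sq L (nat_of_ord i)%:Z (nat_of_ord j)%:Z r | i : 'I_L, j : 'I_L].

(* b_l(A) for the square A = sq L i j r : the square of all sites at
   distance <= l (including diagonal neighbours) of A. *)
Definition ball (L : nat) (i j : int) (r l : nat) : {set site L} :=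
  sq L (i - l%:Z) (j - l%:Z) (r + 2 * l).

(* O is supported on A: O = O_A (x) I_{complement of A}, i.e. its matrix
   elements vanish unless x,y agree outside A, and then depend only on the
   restrictions of x,y to A. *)
Definition supported_on (C : numClosedFieldType) (L d : nat) (A : {set site L})
  (O : 'M[C]_(dimH L d)) : Prop :=
  (forall x y : cfg L d, (exists u, u \notin A /\ x u <> y u) -> opE O x y = 0)
  /\ (forall x y x' y' : cfg L d,
        (forall u, u \in A -> x u = x' u /\ y u = y' u) ->
        (forall u, u \notin A -> x u = y u /\ x' u = y' u) ->
        opE O x y = opE O x' y').

Definition adjmx (C : numClosedFieldType) m n (M : 'M[C]_(m, n)) : 'M[C]_(n, m) :=
  (map_mx Num.conj M)^T.

Definition PB (C : numClosedFieldType) (L d : nat)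
  (Q : {set site L} -> 'M[C]_(dimH L d)) (B : {set site L}) : 'M[C]_(dimH L d) :=
  \big[mulmx/1%:M]_(A in squares L 2 | A \subset B) (1%:M - Q A).

(* P = prod_{A in S(2)} (I - Q_A), projector onto the ground space of H_0. *)
Definition Ptot (C : numClosedFieldType) (L d : nat)
  (Q : {set site L} -> 'M[C]_(dimH L d)) : 'M[C]_(dimH L d) :=
  \big[mulmx/1%:M]_(A in squares L 2) (1%:M - Q A).

Definition vnorm2 (C : numClosedFieldType) n (v : 'cV[C]_n) : C :=
  \sum_i `|v i 0| ^+ 2.

Definition is_opnorm (C : numClosedFieldType) m n (M : 'M[C]_(m, n)) (nrm : C) : Prop :=
  0 <= nrm
  /\ (forall v : 'cV[C]_n, vnorm2 (M *m v) <= nrm ^+ 2 * vnorm2 v)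
  /\ (forall t : C, 0 <= t ->
        (forall v : 'cV[C]_n, vnorm2 (M *m v) <= t ^+ 2 * vnorm2 v) -> nrm <= t).

Definition glue (L d : nat) (A : {set site L}) (y e : cfg L d) : cfg L d :=
  [ffun u => if u \in A then y u else e u].

(* Reduced density matrix of |psi> on A:
   rho_A(a,b) = sum_e psi(a,e) conj(psi(b,e)),
   with A-configurations a,b represented by full configurations x,y
   (only their restriction to A matters). *)
Definition rdm (C : numClosedFieldType) (L d : nat) (A : {set site L})
  (psi : 'cV[C]_(dimH L d)) (x y : cfg L d) : C :=
  \sum_(e : cfg L d | [forall u in A, e u == x u])
     vecE psi e * Num.conj (vecE psi (glue A y e)).

Definition TQO1 (C : numClosedFieldType) (L d Lstar : nat)
  (Q : {set site L} -> 'M[C]_(dimH L d)) : Prop :=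
  forall (i j : int) (r : nat), (0 < r)%N -> (r <= Lstar)%N ->
  forall O : 'M[C]_(dimH L d), supported_on (sq L i j r) O ->
  exists c : C, Ptot Q *m O *m Ptot Q = c *: Ptot Q.

Definition TQO2 (C : numClosedFieldType) (L d Lstar : nat)
  (Q : {set site L} -> 'M[C]_(dimH L d)) : Prop :=
  forall (i j : int) (r : nat), (0 < r)%N -> (r <= Lstar)%N ->
  forall O : 'M[C]_(dimH L d), supported_on (sq L i j r) O ->
  O *m Ptot Q = 0 -> O *m PB Q (ball L i j r 1) = 0.

(* Main.v *)
Require Import Defs.
From HB Require Import structures.
From mathcomp Require Import all_boot all_order all_algebra.
Set Implicit Arguments. Unset Strict Implicit. Unset Printing Implicit Defensive.
Import Order.TTheory GRing.Theory Num.Theory.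
Local Open Scope ring_scope.

Section Prods.
Variables (C : numClosedFieldType) (n : nat) (T : eqType).
Variables (F : T -> 'M[C]_n) (S : pred T).
Hypothesis Fidem : forall a, S a -> F a *m F a = F a.
Hypothesis Fcomm : forall a b, S a -> S b -> F a *m F b = F b *m F a.

Definition pr (s : seq T) := \big[mulmx/1%:M]_(a <- s) F a.

Lemma pr_cons a s : pr (a :: s) = F a *m pr s.
Proof. by rewrite /pr big_cons. Qed.

Lemma pr_nil : pr [::] = 1%:M.
Proof. by rewrite /pr big_nil. Qed.

Lemma pr_comm b s : S b -> all S s -> F b *m pr s = pr s *m F b.
Proof.
move=> Sb; elim: s => [|a s IH] /=; first by rewrite pr_nil mulmx1 mul1mx.
case/andP=> Sa Ss; rewrite pr_cons mulmxA Fcomm // -!mulmxA IH //.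
Qed.

Lemma pr_absl a s : a \in s -> all S s -> F a *m pr s = pr s.
Proof.
elim: s => [|b s IH] //=; rewrite inE => /orP[/eqP->|ais] /andP[Sb Ss].
  by rewrite pr_cons mulmxA Fidem.
have Sa : S a by move/allP: Ss => /(_ a ais).
by rewrite pr_cons mulmxA Fcomm // -mulmxA IH.
Qed.

Lemma pr_absr a s : a \in s -> all S s -> pr s *m F a = pr s.
Proof.
move=> ais Ss; have Sa : S a by move/allP: Ss => /(_ a ais).
by rewrite -pr_comm // pr_absl.
Qed.

Lemma pr_sub s t : {subset s <= t} -> all S t -> pr s *m pr t = pr t.
Proof.
elim: s => [|a s IH] sub St; first by rewrite pr_nil mul1mx.
rewrite pr_cons -mulmxA IH; last by [] ; last by move=> x xs; apply: sub; rewrite inE xs orbT.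
by apply: pr_absl => //; apply: sub; rewrite inE eqxx.
Qed.

Lemma pr_subr s t : {subset s <= t} -> all S t -> pr t *m pr s = pr t.
Proof.
elim: s => [|a s IH] sub St; first by rewrite pr_nil mulmx1.
have at' : a \in t by apply: sub; rewrite inE eqxx.
have Sa : S a by move/allP: St => /(_ a at').
rewrite pr_cons mulmxA pr_absr // IH //.
by move=> x xs; apply: sub; rewrite inE xs orbT.
Qed.

Lemma pr_idem s : all S s -> pr s *m pr s = pr s.
Proof. by move=> Ss; apply: pr_sub. Qed.

Lemma pr_comm2 s t : all S s -> all S t -> pr s *m pr t = pr t *m pr s.
Proof.
elim: s => [|a s IH] /=; first by rewrite pr_nil mulmx1 mul1mx.
move=> /andP[Sa Ss] St; rewrite pr_cons -mulmxA IH // !mulmxA pr_comm //.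
Qed.

End Prods.


Section Supp.
Variables (C : numClosedFieldType) (L d : nat).
Local Notation T := (cfg L d).
Local Notation n := (dimH L d).
Implicit Types (M N : 'M[C]_n) (x y z : T) (A B : {set site L}).

Lemma opE_mul M N x y : opE (M *m N) x y = \sum_z opE M x z * opE N z y.
Proof.
rewrite /opE mxE (reindex (@enum_rank T)) //=.
by apply: onW_bij; exact: enum_rank_bij.
Qed.

Lemma opE_ext M N : (forall x y, opE M x y = opE N x y) -> M = N.
Proof.
move=> H; apply/matrixP => i j; rewrite -(enum_valK i) -(enum_valK j); exact: H.
Qed.

Lemma opE_1 x y : opE (1%:M : 'M[C]_n) x y = (x == y)%:R.
Proof. by rewrite /opE mxE (inj_eq enum_rank_inj). Qed.

Lemma opE_add M N x y : opE (M + N) x y = opE M x y + opE N x y.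
Proof. by rewrite /opE mxE. Qed.

Lemma opE_opp M x y : opE (- M) x y = - opE M x y.
Proof. by rewrite /opE mxE. Qed.

Lemma opE_scale (c : C) M x y : opE (c *: M) x y = c * opE M x y.
Proof. by rewrite /opE mxE. Qed.

Lemma opE_adj M x y : opE (adjmx M) x y = Num.conj (opE M y x).
Proof. by rewrite /opE /adjmx !mxE. Qed.

Lemma suppP A M : supported_on A M ->
  forall x y u, u \notin A -> x u != y u -> opE M x y = 0.
Proof. by move=> [H _] x y u uA xy; apply: H; exists u; split=> //; apply/eqP. Qed.

Definition offeq A x y := [forall u, (u \notin A) ==> (x u == y u)].

Lemma offeqP A x y : reflect (forall u, u \notin A -> x u = y u) (offeq A x y).
Proof.
apply: (iffP forallP) => [H u uA|H u]; first by move: (H u); rewrite uA => /eqP.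
by apply/implyP => uA; rewrite H.
Qed.

Lemma not_offeq A x y : ~~ offeq A x y -> exists2 u, u \notin A & x u != y u.
Proof.
move/forallPn=> [u]; rewrite negb_imply => /andP[uA nu]; by exists u.
Qed.

Lemma supp_zero A M x y : supported_on A M -> ~~ offeq A x y -> opE M x y = 0.
Proof. by move=> sM /not_offeq [u uA nu]; apply: suppP sM _ _ _ uA nu. Qed.

Lemma supp_mono A B M : supported_on A M -> A \subset B -> supported_on B M.
Proof.
move=> sM AB; split.
  move=> x y [u [uB nu]]; apply: (suppP sM (u := u)); last by apply/eqP.
  by apply: contra uB; apply: (subsetP AB).
move=> x y x' y' onB offB.
have onA : forall u, u \in A -> x u = x' u /\ y u = y' u.
  by move=> u uA; apply: onB; apply: (subsetP AB).
have [exy|nxy] := boolP (offeq A x y).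
  have [exy'|nxy'] := boolP (offeq A x' y').
    case: sM => _ H; apply: H => // u uA; split; [exact: (offeqP _ _ _ exy)|exact: (offeqP _ _ _ exy')].
  have [u uA nu] := not_offeq nxy'.
  have uB : u \in B.
    by apply: contraNT nu => uB; rewrite (proj2 (offB u uB)).
  have [e1 e2] := onB u uB.
  move: nu; rewrite -e1 -e2 (offeqP _ _ _ exy) // eqxx //.
have [exy'|nxy'] := boolP (offeq A x' y').
  have [u uA nu] := not_offeq nxy.
  have uB : u \in B.
    by apply: contraNT nu => uB; rewrite (proj1 (offB u uB)).
  have [e1 e2] := onB u uB.
  move: nu; rewrite e1 e2 (offeqP _ _ _ exy') // eqxx //.
by rewrite !(supp_zero sM).
Qed.

Lemma supp_1 A : supported_on A (1%:M : 'M[C]_n).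
Proof.
split.
  move=> x y [u [_ nu]]; rewrite opE_1; case: eqP => // exy; by move: nu; rewrite exy.
move=> x y x' y' onA offA; rewrite !opE_1.
have -> : (x == y) = (x' == y').
  apply/eqP/eqP => e; apply/ffunP => u; case: (boolP (u \in A)) => uA.
  - by rewrite -(proj1 (onA u uA)) -(proj2 (onA u uA)) e.
  - exact: (proj2 (offA u uA)).
  - by rewrite (proj1 (onA u uA)) (proj2 (onA u uA)) e.
  - exact: (proj1 (offA u uA)).
by [].
Qed.

Lemma supp_add A M N : supported_on A M -> supported_on A N -> supported_on A (M + N).
Proof.
move=> [M1 M2] [N1 N2]; split.
  by move=> x y H; rewrite opE_add M1 // N1 // addr0.
by move=> x y x' y' H1 H2; rewrite !opE_add (M2 x y x' y') // (N2 x y x' y').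
Qed.

Lemma supp_opp A M : supported_on A M -> supported_on A (- M).
Proof.
move=> [M1 M2]; split.
  by move=> x y H; rewrite opE_opp M1 // oppr0.
by move=> x y x' y' H1 H2; rewrite !opE_opp (M2 x y x' y').
Qed.

Lemma supp_scale A (c : C) M : supported_on A M -> supported_on A (c *: M).
Proof.
move=> [M1 M2]; split.
  by move=> x y H; rewrite opE_scale M1 // mulr0.
by move=> x y x' y' H1 H2; rewrite !opE_scale (M2 x y x' y').
Qed.

Lemma supp_adj A M : supported_on A M -> supported_on A (adjmx M).
Proof.
move=> [M1 M2]; split.
  move=> x y [u [uA nu]]; rewrite opE_adj M1 ?conjC0 //.
  by exists u; split=> // e; apply: nu.
move=> x y x' y' H1 H2; rewrite !opE_adj (M2 y x y' x') //.
  by move=> u uA; case: (H1 u uA).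
by move=> u uA; case: (H2 u uA).
Qed.

Definition sw (a b c : 'I_d) := if c == a then b else if c == b then a else c.

Lemma swK a b : involutive (sw a b).
Proof.
move=> c; rewrite /sw.
case: (eqVneq c a) => [->|ca].
  by rewrite eqxx; case: (eqVneq b a) => [->|]; rewrite ?eqxx.
case: (eqVneq c b) => [->|cb]; first by rewrite eqxx.
by rewrite (negbTE ca) (negbTE cb).
Qed.

Lemma swa a b : sw a b a = b.
Proof. by rewrite /sw eqxx. Qed.

Lemma swb a b : sw a b b = a.
Proof. by rewrite /sw; case: (eqVneq b a) => [->|]; rewrite ?eqxx. Qed.

Definition sigm A x x' z : T :=
  [ffun u => if u \in A then z u else sw (x u) (x' u) (z u)].

Lemma sigmK A x x' : involutive (sigm A x x').
Proof.
move=> z; apply/ffunP => u; rewrite !ffunE; case: (u \in A) => //; exact: swK.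
Qed.

Lemma supp_mul A M N : supported_on A M -> supported_on A N -> supported_on A (M *m N).
Proof.
move=> sM sN; split.
  move=> x y [u [uA nu]]; rewrite opE_mul big1 // => z _.
  case: (eqVneq (x u) (z u)) => [e|ne].
    by rewrite (suppP sN (u := u)) ?mulr0 // -e; apply/eqP.
  by rewrite (suppP sM (u := u)) ?mul0r.
move=> x y x' y' onA offA; rewrite !opE_mul.
rewrite [RHS](reindex_inj (can_inj (sigmK A x x'))) /=.
apply: eq_bigr => z _.
have [exz|nxz] := boolP (offeq A x z).
  have [M1 M2] := sM; have [N1 N2] := sN.
  have -> : opE M x z = opE M x' (sigm A x x' z).
    apply: M2 => u uA; rewrite ?ffunE ?uA ?(negbTE uA) //.
      by case: (onA u uA).
    rewrite -(offeqP _ _ _ exz u uA) swa; split=> //.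
  have -> : opE N z y = opE N (sigm A x x' z) y'.
    apply: N2 => u uA; rewrite ?ffunE ?uA ?(negbTE uA) //.
      by case: (onA u uA).
    rewrite -(offeqP _ _ _ exz u uA) swa; by case: (offA u uA).
  by [].
have [u uA nu] := not_offeq nxz.
rewrite (suppP sM (u := u)) // mul0r (suppP sM (u := u)) ?mul0r //.
rewrite ffunE (negbTE uA); apply: contra nu => /eqP e.
by rewrite -[z u](swK (x u) (x' u)) -e swb.
Qed.

Lemma disj_comm A B M N : [disjoint A & B] ->
  supported_on A M -> supported_on B N -> M *m N = N *m M.
Proof.
move=> dAB sM sN; apply: opE_ext => x y; rewrite !opE_mul.
have nAB : forall u, u \in A -> u \notin B.
  by move=> u uA; apply/negP => uB; move/disjoint_setI0: dAB => /setP/(_ u); rewrite inE uA uB inE.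
pose z0 : T := [ffun u => if u \in A then y u else x u].
pose w0 : T := [ffun u => if u \in B then y u else x u].
rewrite (bigD1 z0) // big1 ?addr0; last first.
  move=> z /eqP nz; have [u nzu] : exists u, z u != z0 u.
    case: (boolP [exists u, z u != z0 u]) => [/existsP ex|/existsPn H]; first exact: ex; exfalso; apply: nz; apply/ffunP => u; apply/eqP; by move: (H u); rewrite negbK.
  move: nzu; rewrite ffunE; case: (boolP (u \in A)) => uA nzu.
    by rewrite (suppP sN (u := u)) ?mulr0 // nAB.
  by rewrite (suppP sM (u := u)) ?mul0r // eq_sym.
rewrite [RHS](bigD1 w0) // [X in _ = _ + X]big1 ?addr0; last first.
  move=> z /eqP nz; have [u nzu] : exists u, z u != w0 u.
    case: (boolP [exists u, z u != w0 u]) => [/existsP ex|/existsPn H]; first exact: ex; exfalso; apply: nz; apply/ffunP => u; apply/eqP; by move: (H u); rewrite negbK.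
  move: nzu; rewrite ffunE; case: (boolP (u \in B)) => uB nzu.
    by rewrite (suppP sM (u := u)) ?mulr0 //; apply/negP => uA; move: (nAB u uA); rewrite uB.
  by rewrite (suppP sN (u := u)) ?mul0r // eq_sym.
rewrite -[X in X = _]/(opE M x z0 * opE N z0 y + 0) addr0.
have [exy|nxy] := boolP (offeq (A :|: B) x y); last first.
  have [u uAB nu] := not_offeq nxy.
  move: uAB; rewrite inE negb_or => /andP[uA uB].
  have h1 : opE N z0 y = 0 by apply: (suppP sN (u := u)); rewrite // ffunE (negbTE uA).
  have h2 : opE M w0 y = 0 by apply: (suppP sM (u := u)); rewrite // ffunE (negbTE uB).
  by rewrite h1 h2 !mulr0.
have exyu : forall u, u \notin A -> u \notin B -> x u = y u.
  by move=> u uA uB; apply: (offeqP _ _ _ exy); rewrite inE negb_or uA uB.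
have [M1 M2] := sM; have [N1 N2] := sN.
have h1 : opE M x z0 = opE M w0 y.
  apply: M2 => u uA; rewrite !ffunE.
    by rewrite uA (negbTE (nAB u uA)).
  rewrite (negbTE uA); split=> //; case: (boolP (u \in B)) => // uB; exact: exyu.
have h2 : opE N z0 y = opE N x w0.
  apply: N2 => u uB; rewrite !ffunE.
    rewrite uB; case: (boolP (u \in A)) => uA //; by move: (nAB u uA); rewrite uB.
  rewrite (negbTE uB); split=> //; case: (boolP (u \in A)) => // uA; exact: exyu.
by rewrite h1 h2 mulrC.
Qed.

End Supp.


Lemma modz_le (L : nat) (m : int) : (0 < L)%N -> 0 <= m -> (m %% L)%Z <= m.
Proof.
move=> L0 m0; case: (ltP m L%:Z) => h.
  by rewrite modz_small // m0 h.
apply: le_trans h; apply: ltW; apply: ltz_pmod; by rewrite ltz_nat.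
Qed.

Lemma geoA (L : nat) (c a : int) (r k : nat) : (0 < L)%N ->
  ((c - a) %% L)%Z < r%:Z -> ((c - (a - k%:Z)) %% L)%Z < (r + 2 * k)%N%:Z.
Proof.
move=> L0 h.
have -> : c - (a - k%:Z) = (c - a) + k%:Z by rewrite opprB addrCA addrC.
rewrite -modzDml.
have m0 : 0 <= ((c - a) %% L)%Z by apply: modz_ge0; rewrite eqz_nat -lt0n.
apply: le_lt_trans (modz_le L0 _) _; first by apply: addr_ge0.
rewrite PoszD; apply: lt_le_trans (_ : _ < r%:Z + k%:Z) _; first by rewrite ltrD2r.
by rewrite lerD2l lez_nat leq_pmull.
Qed.

Lemma modzD_cong (L : int) (x x' y y' : int) :
  (x %% L = x' %% L)%Z -> (y %% L = y' %% L)%Z -> ((x + y) %% L = (x' + y') %% L)%Z.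
Proof. by move=> hx hy; rewrite -modzDm hx hy modzDm. Qed.

Lemma modzN_cong (L : int) (x x' : int) :
  (x %% L = x' %% L)%Z -> ((- x) %% L = (- x') %% L)%Z.
Proof. by move=> hx; rewrite -modzNm hx modzNm. Qed.

Lemma geoB (L : nat) (u v i a : int) (r : nat) : (0 < L)%N ->
  ((u - i) %% L)%Z < r%:Z -> ((u - a) %% L)%Z < 2%:Z -> ((v - a) %% L)%Z < 2%:Z ->
  ((v - (i - 1)) %% L)%Z < (r + 2)%N%:Z.
Proof.
move=> L0 hp ht hs.
set p := ((u - i) %% L)%Z in hp *; set t := ((u - a) %% L)%Z in ht *.
set s := ((v - a) %% L)%Z in hs *.
have L0' : (L%:Z != 0) by rewrite eqz_nat -lt0n.
have p0 : 0 <= p by apply: modz_ge0.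
have t0 : 0 <= t by apply: modz_ge0.
have s0 : 0 <= s by apply: modz_ge0.
have id : v - (i - 1) = (v - a) - (u - a) + ((u - i) + 1).
  by rewrite [in RHS]opprB subrKA -[(u - i) + 1]addrA subrKA opprB (addrC 1).
have -> : ((v - (i - 1)) %% L)%Z = ((s - t + (p + 1)) %% L)%Z.
  rewrite id; apply: modzD_cong; last by apply: modzD_cong => //; rewrite modz_mod.
  by apply: modzD_cong; [|apply: modzN_cong]; rewrite modz_mod.
have t1 : t <= 1 by rewrite -ltzD1.
have s1 : s <= 1 by rewrite -ltzD1.
have p1 : p + 1 <= r%:Z by rewrite lezD1.
have bnd : s + (p + 1) - t < (r + 2)%N%:Z.
  apply: le_lt_trans (_ : _ <= s + (p + 1)) _; first by rewrite gerBl.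
  apply: le_lt_trans (_ : _ <= 1 + r%:Z) _; first exact: lerD.
  by rewrite PoszD addrC ltrD2l.
rewrite addrAC; apply: le_lt_trans (modz_le L0 _) bnd.
rewrite subr_ge0; apply: le_trans t1 _; apply: le_trans (_ : p + 1 <= _).
  by rewrite lerDr.
by rewrite lerDr.
Qed.
Lemma sq_sub (L : nat) (a b : int) (r k : nat) : (0 < L)%N ->
  sq L a b r \subset sq L (a - k%:Z) (b - k%:Z) (r + 2 * k).
Proof.
move=> L0; apply/subsetP => u; rewrite !inE => /andP[h1 h2].
by apply/andP; split; apply: geoA.
Qed.

Lemma sq_touch (L : nat) (i j : int) (r : nat) (A2 : {set site L}) : (0 < L)%N ->
  A2 \in squares L 2 -> ~~ [disjoint A2 & sq L i j r] ->
  A2 \subset sq L (i - 1%:Z) (j - 1%:Z) (r + 2 * 1).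
Proof.
move=> L0 /imset2P [p q _ _ ->] /pred0Pn [u /andP [ua uA]].
move: ua uA; rewrite !inE => /andP[ua1 ua2] /andP[uA1 uA2].
apply/subsetP => v; rewrite !inE muln1 => /andP[va1 va2].
by apply/andP; split; apply: geoB; eassumption.
Qed.


Section Vec.
Variables (C : numClosedFieldType).

Lemma adjmxM m n p (A : 'M[C]_(m, n)) (B : 'M[C]_(n, p)) :
  adjmx (A *m B) = adjmx B *m adjmx A.
Proof. by rewrite /adjmx map_mxM trmx_mul. Qed.

Lemma adjmxB m n (A B : 'M[C]_(m, n)) : adjmx (A - B) = adjmx A - adjmx B.
Proof. by rewrite /adjmx map_mxB linearB. Qed.

Lemma adjmx1 n : adjmx (1%:M : 'M[C]_n) = 1%:M.
Proof. by rewrite /adjmx map_mx1 trmx1. Qed.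

Lemma adjmxZ m n (c : C) (A : 'M[C]_(m, n)) : adjmx (c *: A) = Num.conj c *: adjmx A.
Proof. by apply/matrixP => i j; rewrite /adjmx !mxE rmorphM. Qed.

Lemma adjmxK m n (A : 'M[C]_(m, n)) : adjmx (adjmx A) = A.
Proof. by apply/matrixP => i j; rewrite /adjmx !mxE conjCK. Qed.

Lemma vnorm2E n (v : 'cV[C]_n) : vnorm2 v = (adjmx v *m v) 0 0.
Proof.
rewrite /vnorm2 mxE; apply: eq_bigr => i _; by rewrite /adjmx !mxE normCKC.
Qed.

Lemma vnorm2_ge0 n (v : 'cV[C]_n) : 0 <= vnorm2 v.
Proof. by apply: sumr_ge0 => i _; rewrite exprn_ge0. Qed.

Lemma vnorm2_eq0 n (v : 'cV[C]_n) : vnorm2 v = 0 -> v = 0.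
Proof.
move=> h; apply/matrixP => i j; rewrite ord1 mxE.
have := psumr_eq0P (fun i _ => exprn_ge0 2 (normr_ge0 (v i 0))) h (i := i) isT.
by move/eqP; rewrite expf_eq0 /= normr_eq0 => /eqP.
Qed.

Definition hproj n (Pm : 'M[C]_n) := Pm *m Pm = Pm /\ adjmx Pm = Pm.

Lemma hproj_quad n (Pm : 'M[C]_n) (v : 'cV[C]_n) :
  hproj Pm -> vnorm2 (Pm *m v) = (adjmx v *m Pm *m v) 0 0.
Proof.
move=> [h1 h2]; rewrite vnorm2E adjmxM h2 -mulmxA (mulmxA Pm) h1 mulmxA //.
Qed.

Lemma hproj_le n (Pm : 'M[C]_n) (v : 'cV[C]_n) :
  hproj Pm -> vnorm2 (Pm *m v) <= vnorm2 v.
Proof.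
move=> hP; have [h1 h2] := hP.
have hQ : hproj (1%:M - Pm).
  split; last by rewrite adjmxB adjmx1 h2.
  by rewrite mulmxBl mul1mx mulmxBr mulmx1 h1 subrr subr0.
have -> : vnorm2 v = vnorm2 (Pm *m v) + vnorm2 ((1%:M - Pm) *m v).
  have addE : forall A B : 'M[C]_1, (A + B) 0 0 = A 0 0 + B 0 0 by move=> A B; rewrite mxE.
  rewrite !hproj_quad // -addE -!mulmxA -mulmxDr -mulmxDl addrC subrK mul1mx.
  by rewrite vnorm2E.
by rewrite lerDl vnorm2_ge0.
Qed.

End Vec.

Section Opnorm.
Variables (C : numClosedFieldType) (n : nat).

Lemma quad_id (O Pm N : 'M[C]_n) (c : C) (v : 'cV[C]_n) : hproj Pm ->
  adjmx O *m O = N -> Pm *m N *m Pm = c *: Pm ->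
  vnorm2 (O *m Pm *m v) = c * vnorm2 (Pm *m v).
Proof.
move=> hP hN hc; rewrite (hproj_quad v hP) vnorm2E !adjmxM (proj2 hP).
have -> : adjmx v *m (Pm *m adjmx O) *m (O *m Pm *m v) = adjmx v *m (Pm *m N *m Pm) *m v.
  by rewrite -hN !mulmxA.
by rewrite hc -scalemxAr -scalemxAl mxE.
Qed.

Lemma witness (Pm : 'M[C]_n) : hproj Pm -> Pm != 0 ->
  exists w : 'cV[C]_n, Pm *m w = w /\ 0 < vnorm2 w.
Proof.
move=> [h1 h2] nz.
have [i [j nij]] : exists i j, Pm i j != 0.
  case: (boolP [exists i, [exists j, Pm i j != 0]]).
    by case/existsP => i /existsP [j nij]; exists i, j.
  move/existsPn => H; case/eqP: nz; apply/matrixP => i j; rewrite mxE.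
  by move/existsPn: (H i) => /(_ j); rewrite negbK => /eqP.
exists (col j Pm); split; first by rewrite colE mulmxA h1.
rewrite lt_def vnorm2_ge0 andbT; apply/eqP => /vnorm2_eq0 /matrixP /(_ i 0).
by rewrite !mxE; apply/eqP.
Qed.

Lemma opnorm_proj (O Pm N : 'M[C]_n) (c : C) : hproj Pm -> Pm != 0 ->
  adjmx O *m O = N -> Pm *m N *m Pm = c *: Pm ->
  is_opnorm (O *m Pm) (sqrtC c).
Proof.
move=> hP nz hN hc.
have [w [Pw w0]] := witness hP nz.
have qw := quad_id w hP hN hc; rewrite Pw in qw.
have c0 : 0 <= c.
  have -> : c = vnorm2 (O *m Pm *m w) / vnorm2 w by rewrite qw mulfK // gt_eqF.
  by apply: divr_ge0; apply: vnorm2_ge0.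
split; first by rewrite sqrtC_ge0.
split.
  move=> v; rewrite -mulmxA (mulmxA O) (quad_id v hP hN hc) sqrtCK.
  by apply: ler_wpM2l => //; apply: hproj_le.
move=> t t0 H; have := H w; rewrite -mulmxA (mulmxA O) qw ler_pM2r // => ct.
by rewrite -(sqrCK t0) ler_sqrtC // qualifE /= ?exprn_ge0.
Qed.

End Opnorm.


Section Rdm.
Variables (C : numClosedFieldType) (L d : nat).
Local Notation T := (cfg L d).
Local Notation n := (dimH L d).

Lemma sum_cfg (f : 'I_n -> C) : \sum_(k < n) f k = \sum_(z : T) f (enum_rank z).
Proof.
rewrite (reindex (@enum_rank T)) //=.
by apply: onW_bij; exact: enum_rank_bij.
Qed.

Definition Kop (A : {set site L}) (x y : T) : 'M[C]_n :=
  \matrix_(k, l) ([forall u in A, (enum_val l : T) u == x u]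
                  && ((enum_val k : T) == glue A y (enum_val l)))%:R.

Lemma opE_K (A : {set site L}) (x y w z : T) :
  opE (Kop A x y) w z = ([forall u in A, z u == x u] && (w == glue A y z))%:R.
Proof. by rewrite /opE /Kop mxE !enum_rankK. Qed.

Lemma glue_eq (A : {set site L}) (y w z : T) : (forall u, u \notin A -> w u = z u) ->
  (w == glue A y z) = [forall u in A, w u == y u].
Proof.
move=> off; apply/eqP/forall_inP => [-> u uA|H]; first by rewrite ffunE uA.
apply/ffunP => u; rewrite ffunE; case: (boolP (u \in A)) => uA.
  by apply/eqP; apply: H.
exact: off.
Qed.

Lemma Kop_supp (A : {set site L}) (x y : T) : supported_on A (Kop A x y).
Proof.
split.
  move=> w z [u [uA nu]]; rewrite opE_K.
  case: eqP => [e|]; last by rewrite andbF.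
  by case: nu; rewrite e ffunE (negbTE uA).
move=> w z w' z' onA offA; rewrite !opE_K.
rewrite (glue_eq y (w := w) (z := z)); last by move=> u uA; case: (offA u uA).
rewrite (glue_eq y (w := w') (z := z')); last by move=> u uA; case: (offA u uA).
have -> : [forall u in A, z u == x u] = [forall u in A, z' u == x u].
  by apply: eq_forallb => u; case: (boolP (u \in A)) => // uA; case: (onA u uA) => _ ->.
have -> : [forall u in A, w u == y u] = [forall u in A, w' u == y u].
  by apply: eq_forallb => u; case: (boolP (u \in A)) => // uA; case: (onA u uA) => ->.
by [].
Qed.

Lemma rdmE (A : {set site L}) (psi : 'cV[C]_n) (x y : T) :
  rdm A psi x y = (adjmx psi *m Kop A x y *m psi) 0 0.
Proof.
rewrite mxE sum_cfg /rdm big_mkcond /=; apply: eq_bigr => z _.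
rewrite mxE sum_cfg.
rewrite (bigD1 (glue A y z)) //= big1 ?addr0; last first.
  move=> w nw; rewrite /adjmx !mxE !enum_rankK (negbTE nw) andbF mulr0.
  by [].
  
rewrite /adjmx !mxE !enum_rankK eqxx andbT.
rewrite /vecE; case: [forall u in A, z u == x u]; last by rewrite mulr0 mul0r.
by rewrite mulr1 mulrC.
Qed.

End Rdm.


Section Main.
Variables (C : numClosedFieldType) (L d Lstar : nat).
Variable (Q : {set site L} -> 'M[C]_(dimH L d)).
Hypothesis L0 : (0 < L)%N.
Hypothesis hQ : forall A, A \in squares L 2 ->
     [/\ Q A *m Q A = Q A, adjmx (Q A) = Q A & supported_on A (Q A)].
Hypothesis hcomm : forall A B, A \in squares L 2 -> B \in squares L 2 ->
     Q A *m Q B = Q B *m Q A.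

Local Notation n := (dimH L d).
Definition F A : 'M[C]_n := 1%:M - Q A.
Definition Sq : pred {set site L} := fun A => A \in squares L 2.

Lemma Fidem A : Sq A -> F A *m F A = F A.
Proof.
move=> SA; have [h _ _] := hQ SA.
by rewrite /F mulmxBl mul1mx mulmxBr mulmx1 h subrr subr0.
Qed.

Lemma Fcomm A B : Sq A -> Sq B -> F A *m F B = F B *m F A.
Proof.
move=> SA SB; rewrite /F !mulmxBl !mul1mx !mulmxBr !mulmx1 hcomm //.
by rewrite !opprB !addrA [LHS]addrAC [RHS]addrAC (addrAC 1%:M).
Qed.

Lemma Fadj A : Sq A -> adjmx (F A) = F A.
Proof. by move=> SA; have [_ h _] := hQ SA; rewrite /F adjmxB adjmx1 h. Qed.

Lemma Fsupp A : Sq A -> supported_on A (F A).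
Proof.
by move=> SA; have [_ _ h] := hQ SA; apply: supp_add; [apply: supp_1|apply: supp_opp].
Qed.

Definition seqB (B : {set site L}) := [seq A <- index_enum {set site L} | (A \in squares L 2) && (A \subset B)].
Definition seqT := [seq A <- index_enum {set site L} | A \in squares L 2].

Lemma PB_pr (B : {set site L}) : PB Q B = pr F (seqB B).
Proof. by rewrite /PB /pr big_filter. Qed.

Lemma Ptot_pr : Ptot Q = pr F seqT.
Proof. by rewrite /Ptot /pr big_filter. Qed.

Lemma all_seqB B : all Sq (seqB B).
Proof. by apply/allP => a; rewrite mem_filter => /andP[/andP[]]. Qed.

Lemma all_seqT : all Sq seqT.
Proof. by apply/allP => a; rewrite mem_filter => /andP[]. Qed.

Lemma mem_seqB B a : (a \in seqB B) = (a \in squares L 2) && (a \subset B).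
Proof. by rewrite mem_filter mem_index_enum andbT. Qed.

Lemma mem_seqT a : (a \in seqT) = (a \in squares L 2).
Proof. by rewrite mem_filter mem_index_enum andbT. Qed.

Lemma pr_adj s : all Sq s -> adjmx (pr F s) = pr F s.
Proof.
elim: s => [|a s IH] /=; first by rewrite pr_nil adjmx1.
case/andP=> Sa Ss; rewrite pr_cons adjmxM IH // Fadj //.
by rewrite (pr_comm (S:=Sq) Fcomm).
Qed.

Lemma pr_hproj s : all Sq s -> hproj (pr F s).
Proof. by move=> Ss; split; [apply: (pr_idem (S:=Sq) Fidem Fcomm) | apply: pr_adj]. Qed.

Lemma pr_supp (B : {set site L}) s : all (fun a => Sq a && (a \subset B)) s -> supported_on B (pr F s).
Proof.
elim: s => [|a s IH] /=; first by rewrite pr_nil => _; apply: supp_1.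
case/andP=> /andP[Sa aB] Ss; rewrite pr_cons; apply: supp_mul (IH Ss).
by apply: supp_mono aB; apply: Fsupp.
Qed.

Lemma PB_supp (B : {set site L}) : supported_on B (PB Q B).
Proof.
rewrite PB_pr; apply: pr_supp; apply/allP => a; by rewrite mem_seqB.
Qed.

Lemma PB_hproj (B : {set site L}) : hproj (PB Q B).
Proof. rewrite PB_pr; apply: pr_hproj; exact: all_seqB. Qed.

Lemma Ptot_hproj : hproj (Ptot Q).
Proof. rewrite Ptot_pr; apply: pr_hproj; exact: all_seqT. Qed.

Lemma PB_sub (B B' : {set site L}) : B \subset B' -> PB Q B *m PB Q B' = PB Q B' /\ PB Q B' *m PB Q B = PB Q B'.
Proof.
move=> BB; rewrite !PB_pr.
have sub : {subset seqB B <= seqB B'}.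
  move=> a; rewrite !mem_seqB => /andP[-> aB] /=; exact: subset_trans aB BB.
split; [apply: (pr_sub (S:=Sq) Fidem Fcomm) | apply: (pr_subr (S:=Sq) Fidem Fcomm)] => //; exact: all_seqB.
Qed.

Lemma PB_tot (B : {set site L}) : PB Q B *m Ptot Q = Ptot Q /\ Ptot Q *m PB Q B = Ptot Q.
Proof.
rewrite PB_pr Ptot_pr.
have sub : {subset seqB B <= seqT}.
  by move=> a; rewrite mem_seqB mem_seqT => /andP[].
split; [apply: (pr_sub (S:=Sq) Fidem Fcomm) | apply: (pr_subr (S:=Sq) Fidem Fcomm)] => //; exact: all_seqT.
Qed.


Section ZL.
Variables (B : {set site L}) (Z : 'M[C]_n).
Hypothesis Zin : forall a, Sq a -> a \subset B -> Z *m F a = Z /\ F a *m Z = Z.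
Hypothesis Zout : forall a, Sq a -> ~~ (a \subset B) -> F a *m Z = Z *m F a.
Definition nB : pred {set site L} := fun a => ~~ (a \subset B).

Lemma ZR s : all Sq s -> Z *m pr F s = pr F (filter nB s) *m Z.
Proof.
elim: s => [|a s IH] /=; first by rewrite !pr_nil mulmx1 mul1mx.
case/andP=> Sa Ss; rewrite pr_cons mulmxA.
case: (boolP (a \subset B)) => aB /=.
  by rewrite /nB aB /= (proj1 (Zin Sa aB)) IH.
by rewrite /nB aB /= -Zout // -mulmxA IH // pr_cons mulmxA.
Qed.

Lemma RZ s : all Sq s -> pr F s *m Z = Z *m pr F (filter nB s).
Proof.
elim: s => [|a s IH] /=; first by rewrite !pr_nil mulmx1 mul1mx.
case/andP=> Sa Ss; rewrite pr_cons -mulmxA IH //.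
case: (boolP (a \subset B)) => aB /=.
  by rewrite /nB aB /= mulmxA (proj2 (Zin Sa aB)).
by rewrite /nB aB /= mulmxA Zout // pr_cons mulmxA.
Qed.

Lemma RZc s : all Sq s -> pr F (filter nB s) *m Z = Z *m pr F (filter nB s).
Proof.
move=> Ss; have: all (predI Sq nB) (filter nB s).
  apply/allP => a; rewrite mem_filter => /andP[na ins]; rewrite /= na andbT; exact: (allP Ss).
elim: (filter nB s) => [|a t IH] /=; first by rewrite !pr_nil mulmx1 mul1mx.
case/andP => /andP[Sa na] St; rewrite pr_cons -mulmxA IH // !mulmxA Zout //.
Qed.

Lemma ZP_PZP s : all Sq s -> pr F s *m pr F s = pr F s ->
  Z *m pr F s = pr F s *m Z *m pr F s.
Proof.
move=> Ss hP.
have e1 : Z *m pr F s = pr F (filter nB s) *m pr F (filter nB s) *m Z.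
  by rewrite -{1}hP mulmxA ZR // -mulmxA ZR // mulmxA.
by rewrite e1 RZ // -RZc // -[RHS]mulmxA ZR // mulmxA.
Qed.

End ZL.

Hypothesis h1 : TQO1 Lstar Q.
Hypothesis h2 : TQO2 Lstar Q.

Lemma PXP (P O : 'M[C]_n) (c : C) : P *m P = P ->
  P *m (O - c *: 1%:M) *m P = P *m O *m P - c *: P.
Proof.
by move=> hP; rewrite mulmxBr mulmxBl -scalemxAr mulmx1 -scalemxAl hP.
Qed.

Lemma part_i (i j : int) (r : nat) (O : 'M[C]_n) :
  (0 < r)%N -> (r + 4 <= Lstar)%N -> supported_on (sq L i j r) O ->
  exists c : C, Ptot Q *m O *m Ptot Q = c *: Ptot Q /\
    PB Q (ball L i j r 2) *m O *m PB Q (ball L i j r 2) = c *: PB Q (ball L i j r 2).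
Proof.
move=> r0 rL sO.
have rL' : (r <= Lstar)%N by apply: leq_trans rL; rewrite leq_addr.
have [c hc] := h1 r0 rL' sO.
exists c; split => //.
set A := sq L i j r.
set B := sq L (i - 1%:Z) (j - 1%:Z) (r + 2 * 1).
set Cc := ball L i j r 2.
have ballE : ball L (i - 1%:Z) (j - 1%:Z) (r + 2 * 1) 1 = Cc.
  by rewrite /ball /Cc -!addrA -!opprD -!addnA.
have AB : A \subset B by apply: sq_sub.
have BC : B \subset Cc by rewrite -ballE; apply: sq_sub.
set X := O - c *: 1%:M.
have sX : supported_on A X.
  by apply: supp_add sO _; apply: supp_opp; apply: supp_scale; apply: supp_1.
set PBm := PB Q B.
set P := Ptot Q.
set Z := PBm *m X *m PBm.
have sZ : supported_on B Z.
  apply: supp_mul; last exact: PB_supp.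
  apply: supp_mul; first exact: PB_supp.
  exact: supp_mono sX AB.
have Zin : forall a, Sq a -> a \subset B -> Z *m F a = Z /\ F a *m Z = Z.
  move=> a Sa aB; have ain : a \in seqB B by rewrite mem_seqB aB andbT; exact: Sa.
  rewrite /Z /PBm PB_pr; split.
    by rewrite -mulmxA (pr_absr (S:=Sq) Fidem Fcomm ain (all_seqB B)).
  by rewrite !mulmxA (pr_absl (S:=Sq) Fidem Fcomm ain (all_seqB B)).
have Zout : forall a, Sq a -> ~~ (a \subset B) -> F a *m Z = Z *m F a.
  move=> a Sa aB.
  have dj : [disjoint a & A].
    by apply: contraNT aB => ndj; apply: sq_touch.
  have cX : F a *m X = X *m F a by apply: disj_comm dj (Fsupp Sa) sX.
  have cP : F a *m PBm = PBm *m F a.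
    by rewrite /PBm PB_pr (pr_comm (S:=Sq) Fcomm Sa (all_seqB B)).
  by rewrite /Z !mulmxA cP -(mulmxA PBm (F a) X) cX mulmxA -(mulmxA _ (F a) PBm) cP !mulmxA.
have hP : P *m P = P by apply: (proj1 Ptot_hproj).
have PZP : P *m Z *m P = 0.
  have [e1 e2] := PB_tot B.
  rewrite /Z -/PBm -/P.
  have -> : P *m (PBm *m X *m PBm) *m P = P *m X *m P.
    by rewrite !mulmxA e2 -!mulmxA e1.
  by rewrite PXP // hc subrr.
have ZP0 : Z *m P = 0.
  rewrite /P Ptot_pr (ZP_PZP Zin Zout all_seqT) -Ptot_pr ?PZP //.
have r2a : (0 < r + 2 * 1)%N by rewrite addn_gt0 r0.
have r2b : (r + 2 * 1 <= Lstar)%N by apply: leq_trans rL; rewrite leq_add2l.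
have := h2 r2a r2b sZ ZP0.
rewrite ballE => ZC.
set PC := PB Q Cc.
have [eBC eCB] := PB_sub BC.
have hPC : PC *m PC = PC by apply: (proj1 (PB_hproj Cc)).
have e : PC *m Z *m PC = PC *m X *m PC.
  by rewrite /Z /PBm !mulmxA eCB -!mulmxA eBC.
have h0 : PC *m X *m PC = 0.
  rewrite -e -mulmxA ZC. exact: (mulmx0 _ PC).
by move: h0; rewrite PXP // => /eqP; rewrite subr_eq0 => /eqP.
Qed.

End Main.


Lemma val_const (C : numClosedFieldType) n (M Pm : 'M[C]_n) (c : C) (psi : 'cV[C]_n) :
  hproj Pm -> Pm *m M *m Pm = c *: Pm -> Pm *m psi = psi ->
  (adjmx psi *m M *m psi) 0 0 = c * vnorm2 psi.
Proof.
move=> [hid hadj] hc hpsi.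
have e1 : adjmx psi = adjmx psi *m Pm by rewrite -{1}hpsi adjmxM hadj.
have -> : adjmx psi *m M *m psi = adjmx psi *m (Pm *m M *m Pm) *m psi.
  by rewrite {1}e1 -{2}hpsi !mulmxA.
rewrite hc -scalemxAr -scalemxAl mxE -e1 vnorm2E //.
Qed.

Theorem corollary1 (C : numClosedFieldType) (L d Lstar : nat)
  (Q : {set site L} -> 'M[C]_(dimH L d)) :
  (0 < L)%N -> (0 < d)%N ->
  (forall A, A \in squares L 2 ->
     [/\ Q A *m Q A = Q A, adjmx (Q A) = Q A & supported_on A (Q A)]) ->
  (forall A B, A \in squares L 2 -> B \in squares L 2 ->
     Q A *m Q B = Q B *m Q A) ->
  Ptot Q != 0 ->
  TQO1 Lstar Q -> TQO2 Lstar Q ->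
  forall (i j : int) (r : nat) (O : 'M[C]_(dimH L d)),
  (0 < r)%N -> (r + 4 <= Lstar)%N ->
  supported_on (sq L i j r) O ->
  [/\ (* (i) *)
      exists c : C, PB Q (ball L i j r 2) *m O *m PB Q (ball L i j r 2)
                    = c *: PB Q (ball L i j r 2),
      (* (ii) *)
      (forall psi phi : 'cV[C]_(dimH L d),
         vnorm2 psi = 1 -> vnorm2 phi = 1 ->
         PB Q (ball L i j r 2) *m psi = psi ->
         PB Q (ball L i j r 2) *m phi = phi ->
         forall x y, rdm (sq L i j r) psi x y = rdm (sq L i j r) phi x y)
      /\
      (forall psi phi : 'cV[C]_(dimH L d),
         vnorm2 psi = 1 -> vnorm2 phi = 1 ->
         PB Q (ball L i j r 2) *m psi = psi ->
         Ptot Q *m phi = phi ->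
         forall x y, rdm (sq L i j r) psi x y = rdm (sq L i j r) phi x y)
    & (* (iii) *)
      exists nrm : C, is_opnorm (O *m Ptot Q) nrm
                      /\ is_opnorm (O *m PB Q (ball L i j r 2)) nrm].
Proof.
move=> L0 d0 hQ hcomm hP0 h1 h2 i j r O r0 rL sO.
have pi := part_i L0 hQ hcomm h1 h2 r0 rL.
set PC := PB Q (ball L i j r 2).
have hPC : hproj PC by apply: PB_hproj hQ hcomm _.
have rdm_c : forall x y, exists cK, forall psi, vnorm2 psi = 1 -> PC *m psi = psi ->
    rdm (sq L i j r) psi x y = cK.
  move=> x y; have [cK [_ hK]] := pi i j _ (Kop_supp C (sq L i j r) x y).
  exists cK => psi n1 hpsi; rewrite rdmE (val_const hPC hK hpsi) n1 mulr1 //.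
have PCtot : PC *m Ptot Q = Ptot Q by apply: (proj1 (PB_tot hQ hcomm _)).
split.
- by have [c [_ hc]] := pi i j _ sO; exists c.
- split.
    move=> psi phi n1 n2 hpsi hphi x y; have [cK H] := rdm_c x y.
    by rewrite (H psi) // (H phi).
  move=> psi phi n1 n2 hpsi hphi x y; have [cK H] := rdm_c x y.
  rewrite (H psi) // (H phi) //.
  by rewrite -hphi mulmxA PCtot.
have sN : supported_on (sq L i j r) (adjmx O *m O) by apply: supp_mul (supp_adj sO) sO.
have [c [hc1 hc2]] := pi i j _ sN.
exists (sqrtC c); split.
  apply: (opnorm_proj (Ptot_hproj hQ hcomm)) hP0 erefl hc1.
apply: (opnorm_proj hPC) _ erefl hc2.
apply: contraNneq hP0 => e; by rewrite -PCtot e mul0mx.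
Qed.
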